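(* Let $S\subseteq\mathbb{R}^d$ be a set and $K>0$ such that $\frac{\|p_1-p_2\|}{\|q_1-q_2\|}\le K$ for all $p_1,p_2,q_1,q_2\in S$ with $q_1\ne q_2$. If $S$ is $(p,j,\alpha)$-flat for some $p\in S$, then $S$ is $(q,j,20(K\alpha)^{1/2})$-flat for every $q\in S$.
   Context: A $j$-plane is an affine subspace of dimension $j$. The angle between a vector $v$ and a plane $\Lambda$ is the infimum of the angles between $v$ and vectors $w\in\Lambda-\Lambda$. A set $S$ is $(p,j,\alpha)$-flat (for $p\in S$) if there exists a $j$-plane $\Lambda_p$ such that every vector $p-q$, $q\in S$, makes angle at most $\alpha$ with $\Lambda_p$. *)

(* Defs.v *)
From HB Require Import structures.
From mathcomp Require Import all_boot all_order all_algebra.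
From mathcomp Require Import all_classical all_reals all_analysis.
Set Implicit Arguments. Unset Strict Implicit. Unset Printing Implicit Defensive.
Import Order.TTheory GRing.Theory Num.Theory.
Local Open Scope classical_set_scope.
Local Open Scope ring_scope.

Section Flat.
Context {R : realType} {d : nat}.

Definition dotv (u v : 'rV[R]_d) : R := (u *m v^T) 0 0.
Definition vnorm (u : 'rV[R]_d) : R := Num.sqrt (dotv u u).

Definition vangle (u v : 'rV[R]_d) : R := acos (dotv u v / (vnorm u * vnorm v)).

Definition jplane (j : nat) (L : set 'rV[R]_d) : Prop :=
  exists (a : 'rV[R]_d) (U : 'M[R]_d),
    \rank U = j /\ L = [set a + u | u in [set u : 'rV[R]_d | (u <= U)%MS]].

Definition diffset (L : set 'rV[R]_d) : set 'rV[R]_d :=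
  [set x - y | x in L & y in L].

(* angle between v and plane L: infimum (in \bar R; +oo if empty) of
   the angles between v and nonzero w in L - L *)
Definition angle_plane (v : 'rV[R]_d) (L : set 'rV[R]_d) : \bar R :=
  ereal_inf [set (vangle v w)%:E | w in [set w | diffset L w /\ w != 0]].

Definition flat (S : set 'rV[R]_d) (p : 'rV[R]_d) (j : nat) (alpha : R) : Prop :=
  exists L, jplane j L /\
    forall q, S q -> q != p -> (angle_plane (p - q) L <= alpha%:E)%E.

End Flat.

(* Main.v *)
Require Import Defs.
From HB Require Import structures.
From mathcomp Require Import all_boot all_order all_algebra.
From mathcomp Require Import all_classical all_reals all_analysis.
Import Order.TTheory GRing.Theory Num.Theory.
Import numFieldNormedType.Exports.
From mathcomp Require Import ring lra.
Local Open Scope classical_set_scope.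
Local Open Scope ring_scope.
Section Trig.
Context {R : realType}.

Lemma mono0 (f df : R -> R) (x : R) : 0 <= x ->
  (forall y : R, is_derive y (1:R) f (df y)) -> (forall y, 0 <= y -> 0 <= df y) ->
  f 0 <= f x.
Proof.
move=> x0 fd dfp.
have cont : {within [set` `[0, x]%R], continuous f}.
  apply: (@derivable_within_continuous _ _ f `[0, x]%R) => y _.
  exact: ex_derive.
have [c cx E] := MVT_segment x0 (fun y _ => fd y) cont.
rewrite -subr_ge0 E mulr_ge0 ?subr_ge0 // dfp //.
by move: cx; rewrite in_itv /= => /andP[].
Qed.

Lemma sin_le_id (x : R) : 0 <= x -> sin x <= x.
Proof.
move=> x0.
have := @mono0 (id - sin : R -> R) (fun y => 1 - cos y) x x0.
rewrite !fctE sin0 subr0 subr_ge0; apply => //.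
Qed.

Lemma cos_ge (x : R) : 0 <= x -> 1 - x ^+ 2 / 2 <= cos x.
Proof.
move=> x0.
have := @mono0 (cos + (fun y => y ^+ 2 / 2) : R -> R) (fun y => - sin y + y) x x0.
rewrite !fctE cos0 expr0n /= mul0r addr0 -lerBlDr; apply.
- move=> y.
  have h : is_derive y (1:R) (fun x1 : R => x1 ^+ 2 / 2) (y).
    apply: is_derive_eq.
    rewrite !scaler0 add0r -mulr2n.
    rewrite -[LHS]/(2^-1 * ((y * 1) *+ 2)) mulr1 -[y *+ 2]/(y + y). lra.

  exact: (is_derive_eq (is_deriveD (is_derive_cos y) h)).
- by move=> y y0; rewrite addrC subr_ge0 sin_le_id.
Qed.

Lemma sin_ge (x : R) : 0 <= x -> x - x ^+ 3 / 6 <= sin x.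
Proof.
move=> x0.
have M := @mono0 (sin + (fun y => y ^+ 3 / 6 - y) : R -> R) (fun y => cos y + (y ^+ 2 / 2 - 1)) x x0.
rewrite !fctE sin0 expr0n /= mul0r subr0 addr0 in M.
suff H : 0 <= sin x + (x ^+ 3 / 6 - x) by lra.
apply: M.
- move=> y.
  have h : is_derive y (1:R) (fun x1 : R => x1 ^+ 3 / 6 - x1) (y ^+ 2 / 2 - 1).
    apply: is_derive_eq.
    rewrite !scaler0 add0r.
    rewrite -[LHS]/(6^-1 * (y * (y*1 + y*1) + (y*y)*1) - 1).
    by rewrite expr2; field.
  exact: (is_derive_eq (is_deriveD (is_derive_sin y) h)).
- move=> y y0; have := @cos_ge y y0; lra.
Qed.

End Trig.

Section Vec.
Context {R : realType} {d : nat}.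
Implicit Types u v w z : 'rV[R]_d.


Lemma dotvE u v : dotv u v = \sum_i u 0 i * v 0 i.
Proof. by rewrite /dotv !mxE; apply: eq_bigr => i _; rewrite mxE. Qed.

Lemma dotvC u v : dotv u v = dotv v u.
Proof. by rewrite !dotvE; apply: eq_bigr => i _; rewrite mulrC. Qed.

Lemma dotvDl u v w : dotv (u + v) w = dotv u w + dotv v w.
Proof. by rewrite !dotvE -big_split; apply: eq_bigr => i _; rewrite mxE mulrDl. Qed.

Lemma dotvZl (a : R) u w : dotv (a *: u) w = a * dotv u w.
Proof. by rewrite !dotvE mulr_sumr; apply: eq_bigr => i _; rewrite mxE mulrA. Qed.

Lemma dotvNl u w : dotv (- u) w = - dotv u w.
Proof. by rewrite -scaleN1r dotvZl mulN1r. Qed.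

Lemma dotvBl u v w : dotv (u - v) w = dotv u w - dotv v w.
Proof. by rewrite dotvDl dotvNl. Qed.

Lemma dotvDr u v w : dotv w (u + v) = dotv w u + dotv w v.
Proof. by rewrite dotvC dotvDl !(dotvC w). Qed.

Lemma dotvZr (a : R) u w : dotv w (a *: u) = a * dotv w u.
Proof. by rewrite dotvC dotvZl dotvC. Qed.

Lemma dotvNr u w : dotv w (- u) = - dotv w u.
Proof. by rewrite dotvC dotvNl dotvC. Qed.

Lemma dotvBr u v w : dotv w (u - v) = dotv w u - dotv w v.
Proof. by rewrite dotvDr dotvNr. Qed.

Lemma dotv0r u : dotv u 0 = 0.
Proof. by rewrite -(scale0r (0 : 'rV[R]_d)) dotvZr mul0r. Qed.

Lemma dotv_ge0 u : 0 <= dotv u u.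
Proof. by rewrite dotvE; apply: sumr_ge0 => i _; rewrite -expr2 sqr_ge0. Qed.

Lemma dotv_eq0 u : dotv u u = 0 -> u = 0.
Proof.
rewrite dotvE => /psumr_eq0P H; apply/rowP => i; rewrite mxE.
have /eqP := H (fun j _ => ltac:(by rewrite -expr2 sqr_ge0)) i isT.
by rewrite mulf_eq0 orbb => /eqP.
Qed.

Lemma dotv_gt0 u : u != 0 -> 0 < dotv u u.
Proof.
move=> u0; rewrite lt_neqAle dotv_ge0 andbT eq_sym.
by apply/eqP => /dotv_eq0 H; rewrite H eqxx in u0.
Qed.

Lemma vnorm_ge0 u : 0 <= vnorm u.
Proof. exact: sqrtr_ge0. Qed.

Lemma vnorm_sq u : vnorm u ^+ 2 = dotv u u.
Proof. by rewrite sqr_sqrtr // dotv_ge0. Qed.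

Lemma vnorm_gt0 u : u != 0 -> 0 < vnorm u.
Proof. by move=> u0; rewrite sqrtr_gt0 dotv_gt0. Qed.

Lemma vnorm0 : vnorm (0 : 'rV[R]_d) = 0.
Proof. by rewrite /vnorm dotv0r sqrtr0. Qed.

Lemma cauchy_schwarz u v : dotv u v ^+ 2 <= dotv u u * dotv v v.
Proof.
have [->|v0] := eqVneq v 0; first by rewrite !dotv0r expr0n mulr0.
have vv := dotv_gt0 _ v0.
have := dotv_ge0 (dotv v v *: u - dotv u v *: v).
rewrite !(dotvBl, dotvBr, dotvZl, dotvZr) (dotvC v u) => H.
have H2 : 0 <= dotv v v * (dotv u u * dotv v v - dotv u v ^+ 2) by nra.
by rewrite pmulr_rge0 // subr_ge0 in H2.
Qed.

Lemma dot_le_norm u v : `|dotv u v| <= vnorm u * vnorm v.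
Proof.
rewrite /vnorm -sqrtrM ?dotv_ge0 // -sqrtr_sqr ler_sqrt ?cauchy_schwarz //.
by rewrite mulr_ge0 ?dotv_ge0.
Qed.

Lemma vnormD u v : vnorm (u + v) <= vnorm u + vnorm v.
Proof.
have h1 := vnorm_ge0 u; have h2 := vnorm_ge0 v.
rewrite -(ger0_norm (addr_ge0 h1 h2)) -sqrtr_sqr {1}/vnorm ler_sqrt; last first.
  by rewrite sqr_ge0.
rewrite !(dotvDl, dotvDr) (dotvC v u) -!vnorm_sq.
have := dot_le_norm u v; rewrite ler_norml => /andP[_ h3].
nra.
Qed.

Lemma vnormN u : vnorm (- u) = vnorm u.
Proof. by rewrite /vnorm dotvNl dotvNr opprK. Qed.

Lemma vnormB u v : vnorm (u - v) <= vnorm u + vnorm v.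
Proof. by rewrite -(vnormN v) vnormD. Qed.

End Vec.

Section Geo.
Context {R : realType} {d : nat}.
Implicit Types u v w z : 'rV[R]_d.

Lemma cos_le8 (t : R) : 0 <= t <= 2 -> cos t <= 1 - t ^+ 2 / 8.
Proof.
move=> /andP[t0 t2].
have u0 : 0 <= t / 2 by lra.
have u1 : t / 2 <= 1 by lra.
have E : t = (t / 2) *+ 2 by rewrite mulr2n; field.
rewrite {1}E cos_mulr2n cos2sin2.
have := sin_ge _ u0.
have ht : t ^+ 2 / 8 = (t / 2) ^+ 2 / 2 by field.
rewrite ht; move: u0 u1; set u := t / 2 => u0 u1 hs.
have hu3 : u ^+ 3 <= u by rewrite !exprS expr0 mulr1; nra.
have hs2 : u / 2 <= sin u by lra.
rewrite mulr2n; nra.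
Qed.

Lemma acos_le (c t : R) : -1 <= c <= 1 -> 0 <= t <= pi -> cos t <= c -> acos c <= t.
Proof.
move=> c11 t0 ct; rewrite leNgt; apply/negP => lt.
have hc : c \in `[-1, 1] by rewrite in_itv.
have : cos (acos c) < cos t.
  have m1 : acos c \in `[0, pi] by rewrite in_itv /= acos_ge0 ?acos_lepi.
  have m2 : t \in `[0, pi] by rewrite in_itv.
  by rewrite ltr_cos.
by rewrite acosK // ltNge ct.
Qed.

Lemma ratio_bound v w : v != 0 -> w != 0 ->
  -1 <= dotv v w / (vnorm v * vnorm w) <= 1.
Proof.
move=> v0 w0.
have p := mulr_gt0 (vnorm_gt0 _ v0) (vnorm_gt0 _ w0).
have := dot_le_norm v w; rewrite ler_norml => /andP[a b].
by rewrite ler_pdivlMr // ler_pdivrMr // mulN1r mul1r a b.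
Qed.

Lemma angle_ge0 v w : v != 0 -> w != 0 -> 0 <= vangle v w.
Proof. by move=> v0 w0; apply: acos_ge0; exact: ratio_bound. Qed.

Lemma key_src v w (phi : R) : v != 0 -> w != 0 -> vangle v w <= phi ->
  exists t : R, dotv (v - t *: w) (v - t *: w) <= phi ^+ 2 * dotv v v.
Proof.
move=> v0 w0 h.
have hc := ratio_bound _ _ v0 w0.
move: hc h; rewrite /vangle; set c := dotv v w / (vnorm v * vnorm w) => hc h.
have y0 : 0 <= acos c := acos_ge0 hc.
have cy : cos (acos c) = c by rewrite acosK // in_itv.
have := cos_ge _ y0; rewrite cy => hcos.
have yp : acos c ^+ 2 <= phi ^+ 2 by nra.
have c2 : 1 - c ^+ 2 <= phi ^+ 2.
  move: hc => /andP[c1 c3].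
  have h1 : 1 - c <= phi ^+ 2 / 2 by lra.
  have h2 : 0 <= (phi ^+ 2 / 2 - (1 - c)) * (1 + c) by apply: mulr_ge0; lra.
  have h3 : 0 <= phi ^+ 2 by exact: sqr_ge0.
  nra.
exists (dotv v w / dotv w w).
rewrite !(dotvBl, dotvBr, dotvZl, dotvZr) (dotvC w v).
have a0 := dotv_gt0 _ v0; have b0 := dotv_gt0 _ w0.
have ce : c ^+ 2 = dotv v w ^+ 2 / (dotv v v * dotv w w).
  by rewrite /c expr_div_n exprMn !vnorm_sq.
move: c2; rewrite ce.
move: a0 b0; set a := dotv v v; set b := dotv w w; set m := dotv v w => a0 b0 c2.
have -> : a - m / b * m - m / b * (m - m / b * b) =
   a * (1 - m ^+ 2 / (a * b)).
  by field; rewrite ?gt_eqF //.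
by rewrite [X in _ <= X]mulrC ler_wpM2l // ltW.
Qed.

Lemma key_tgt v z (delta : R) : v != 0 -> vnorm (v - z) <= delta * vnorm v ->
  0 <= delta <= 1 / 2 ->
  z != 0 /\ 1 - delta ^+ 2 <= dotv v z / (vnorm v * vnorm z).
Proof.
move=> v0 hvz /andP[d0 d1].
have a0 := vnorm_gt0 _ v0.
have e0 := vnorm_ge0 (v - z).
have tri : vnorm v <= vnorm z + vnorm (v - z).
  by have := vnormD z (v - z); rewrite [z + _]addrC subrK.
have b0 : 0 < vnorm z by nra.
have z0 : z != 0.
  by apply/eqP => z0; rewrite z0 vnorm0 ltxx in b0.
split => //.
rewrite ler_pdivlMr ?mulr_gt0 //.
have ex : vnorm (v - z) ^+ 2 = vnorm v ^+ 2 - 2 * dotv v z + vnorm z ^+ 2.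
  rewrite !vnorm_sq !(dotvBl, dotvBr) (dotvC z v); ring.
move: ex a0 e0 tri b0 hvz.
set a := vnorm v; set b := vnorm z; set e := vnorm (v - z); set m := dotv v z.
move=> ex a0 e0 tri b0 hvz.
have e2 : e ^+ 2 <= delta ^+ 2 * a ^+ 2 by nra.
have k1 : 0 <= delta ^+ 2 * (a * (2 * b - a)) by apply: mulr_ge0; [exact: sqr_ge0| nra].
have k2 : 0 <= (a - b) ^+ 2 by exact: sqr_ge0.

nra.
Qed.

Lemma diffsetP (a : 'rV[R]_d) (U : 'M[R]_d) w :
  diffset [set a + u | u in [set u : 'rV[R]_d | (u <= U)%MS]] w <-> (w <= U)%MS.
Proof.
split.
  case=> x [u1 h1 <-] [y [u2 h2 <-] <-].
  rewrite opprD addrACA subrr add0r -scaleN1r.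
  exact: addmx_sub h1 (scalemx_sub _ h2).
move=> hw; exists (a + w); first by exists w.
exists (a + 0); first by exists 0 => //=; exact: sub0mx.
by rewrite addr0 [a + w]addrC addrK.
Qed.

End Geo.

Theorem lemma7 (R : realType) (d : nat) (S : set 'rV[R]_d) (K : R) (j : nat)
  (alpha : R) (p : 'rV[R]_d) :
  0 < K ->
  (forall p1 p2 q1 q2, S p1 -> S p2 -> S q1 -> S q2 -> q1 != q2 ->
     vnorm (p1 - p2) / vnorm (q1 - q2) <= K) ->
  S p -> flat S p j alpha ->
  forall q, S q -> flat S q j (20%:R * Num.sqrt (K * alpha)).
Proof.
move=> K0 HK Sp [L [[a [U [rkU LE]]] HL]] q Sq.
exists L; split; first by exists a, U.
move=> q' Sq' qq'.
have Hsrc : forall r, S r -> r != p -> forall eps : R, 0 < eps ->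
    exists w, (w <= U)%MS /\ w != 0 /\ vangle (p - r) w < alpha + eps.
  move=> r Sr rp eps e0.
  have h := HL r Sr rp.
  have : (angle_plane (p - r) L < (alpha + eps)%:E)%E.
    by apply: (le_lt_trans h); rewrite lte_fin ltrDl.
  case/ereal_inf_lt => _ [w [hw w0] <-]; rewrite lte_fin => hlt.
  exists w; split; last by split.
  by move: hw; rewrite LE => /diffsetP.
have [r [Sr rp]] : exists r, S r /\ r != p.
  case: (eqVneq q p) => [qp|qp]; last by exists q.
  by exists q'; rewrite -qp.
have a0 : 0 <= alpha.
  rewrite leNgt; apply/negP => an.
  have na : 0 < - alpha by rewrite oppr_gt0.
  have [w [_ [w0 h]]] := Hsrc r Sr rp (- alpha) na.
  rewrite subrr in h.
  have pr : p - r != 0 by rewrite subr_eq0 eq_sym.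
  have := angle_ge0 _ _ pr w0.
  by rewrite leNgt h.
have [w1 [w1U [w1n _]]] := Hsrc r Sr rp 1 ltr01.
set v := q - q'.
have v0 : v != 0 by rewrite subr_eq0 eq_sym.
have s0 : 0 <= Num.sqrt (K * alpha) := sqrtr_ge0 _.
have s2 : Num.sqrt (K * alpha) ^+ 2 = K * alpha.
  by rewrite sqr_sqrtr // mulr_ge0 // ltW.
move: s0 s2; set s := Num.sqrt (K * alpha) => s0 s2.
have pi0 := pi_gt0 R.
have pi2 := @pihalf_lt2 R.
case: (lerP (pi / 2) (20%:R * s)) => [big|small].
  have [w [wU [wn wpos]]] : exists w, (w <= U)%MS /\ w != 0 /\ 0 <= dotv v w.
    case: (lerP 0 (dotv v w1)) => h; first by exists w1.
    exists (- w1); split; first by rewrite -scaleN1r scalemx_sub.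
    by rewrite oppr_eq0 dotvNr oppr_ge0 ltW.
  apply: ge_ereal_inf; exists (vangle v w)%:E.
    by exists w => //; split => //; rewrite LE; apply/diffsetP.
  rewrite lee_fin; apply: le_trans big.
  apply: acos_le; first exact: ratio_bound.
    by apply/andP; split; lra.
  by rewrite cos_pihalf divr_ge0 // mulr_ge0 // vnorm_ge0.
apply/lee_addgt0Pr => eta eta0.
set eta' := Num.min eta (pi / 2 - 20%:R * s).
have he1 : eta' <= eta by rewrite ge_min lexx.
have he2 : eta' <= pi / 2 - 20%:R * s by rewrite ge_min lexx orbT.
have he0 : 0 < eta' by rewrite lt_min eta0 subr_gt0 small.
set eps := eta' / (16%:R * K).
have eps0 : 0 < eps by rewrite divr_gt0 // mulr_gt0.
set phi := alpha + eps.
have phi0 : 0 <= phi by rewrite addr_ge0 // ltW.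
have Hz : forall r, S r -> exists z, (z <= U)%MS /\
    vnorm ((p - r) - z) <= phi * vnorm (p - r).
  move=> r0 Sr0; case: (eqVneq r0 p) => [->|r0p].
    by exists 0; split; [exact: sub0mx | rewrite subrr subr0 vnorm0 mulr0].
  have [w [wU [wn hlt]]] := Hsrc r0 Sr0 r0p eps eps0.
  have pr0 : p - r0 != 0 by rewrite subr_eq0 eq_sym.
  have [t ht] := key_src _ _ _ pr0 wn (ltW hlt).
  exists (t *: w); split; first exact: scalemx_sub.
  apply: (le_trans (y := Num.sqrt (phi ^+ 2 * dotv (p - r0) (p - r0)))).
    by rewrite /vnorm ler_sqrt // mulr_ge0 // ?sqr_ge0 // dotv_ge0.
  by rewrite sqrtrM ?sqr_ge0 // sqrtr_sqr ger0_norm.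
have Kb : forall r0, S r0 -> vnorm (p - r0) <= K * vnorm v.
  move=> r0 Sr0.
  have qq : q != q' by rewrite eq_sym.
  have := HK p r0 q q' Sp Sr0 Sq Sq' qq.
  by rewrite ler_pdivrMr // vnorm_gt0.
have [zq [zqU hzq]] := Hz q Sq.
have [zq' [zq'U hzq']] := Hz q' Sq'.
set z := zq' - zq.
set delta := 2%:R * K * phi.
have hvz : vnorm (v - z) <= delta * vnorm v.
  have -> : v - z = (p - q' - zq') - (p - q - zq).
    by apply/rowP => i; rewrite !mxE; ring.
  apply: (le_trans (vnormB _ _)).
  have k1 := Kb q Sq; have k2 := Kb q' Sq'.
  have n1 := vnorm_ge0 (p - q); have n2 := vnorm_ge0 (p - q').
  rewrite /delta; nra.
have de : delta = 2%:R * s ^+ 2 + eta' / 8%:R.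
  rewrite s2 /delta /phi /eps; field; rewrite gt_eqF //.
have hs : s < 1 / 10%:R by lra.
have hd : 0 <= delta <= 1 / 2 by apply/andP; split; nra.
have [zn hc] := key_tgt _ _ _ v0 hvz hd.
apply: ge_ereal_inf; exists (vangle v z)%:E.
  exists z => //; split => //; rewrite LE; apply/diffsetP.
  by rewrite addmx_sub // -scaleN1r scalemx_sub.
rewrite -EFinD lee_fin.
apply: (le_trans (y := 20%:R * s + eta')); last by lra.
apply: acos_le; first exact: ratio_bound.
  by apply/andP; split; lra.
have ht2 : 0 <= 20%:R * s + eta' <= 2 by apply/andP; split; lra.
apply: (le_trans (cos_le8 _ ht2)).
  have hdt : delta <= (20%:R * s + eta') / 3%:R by nra.
  have : delta ^+ 2 <= (20%:R * s + eta') ^+ 2 / 9%:R.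
    have hd0 : 0 <= delta by case/andP: hd.
    nra.
  move=> h9.
  have h8 : 0 <= (20%:R * s + eta') ^+ 2 by exact: sqr_ge0.
  lra.
Qed.
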